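(* Let $G=(V,E)$ be a graph with colouring $f:V\to\{B,R\}$. If $E'$ is an optimal solution to the MIE problem on $(G,f)$, or an optimal solution to the MIAE problem on $(G,f)$, then no edge of $E'\setminus E$ has both endpoints red.
   Context: Graphs are finite, simple and undirected. A colouring $f:V\to\{B,R\}$ partitions $V$ into the blue nodes $B=f^{-1}(B)$ and red nodes $R=f^{-1}(R)$. For an edge set $E'$ on $V$ and $v\in V$, let $b_{E'}(v)$ and $r_{E'}(v)$ be the numbers of blue and red neighbours of $v$ in $(V,E')$. A node $v$ is under (majority) illusion in $(V,E')$ if $r_{E'}(v)>b_{E'}(v)$. Standing assumption: $|B|>|R|$. An optimal solution to MIAE is an edge set $E'\supseteq E$ on $V$ such that no node is under illusion in $(V,E')$ and $|E'\setminus E|$ is minimum among all such sets. An optimal solution to MIRE is an edge set $E'\subseteq E$ such that no node is under illusion in $(V,E')$ and $|E\setminus E'|$ is minimum among all such sets. An optimal solution to MIE is an edge set $E'$ on $V$ such that no node is under illusion in $(V,E')$ and $|E\setminus E'|+|E'\setminus E|$ is minimum among all such sets. *)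

(* Defs.v *)
From mathcomp Require Import all_boot.
Set Implicit Arguments. Unset Strict Implicit. Unset Printing Implicit Defensive.

Inductive colour := Blue | Red.

Definition is_blue (c : colour) : bool := if c is Blue then true else false.
Definition is_red (c : colour) : bool := if c is Red then true else false.

Section Graphs.
Variable T : finType.

(* An edge set on V = T: a set of 2-element subsets of T
   (finite, simple, undirected). *)
Definition edge_set (E : {set {set T}}) : bool :=
  [forall e in E, #|e| == 2].

Definition blue_nodes (f : T -> colour) : {set T} := [set v | is_blue (f v)].
Definition red_nodes (f : T -> colour) : {set T} := [set v | is_red (f v)].

Definition bdeg (f : T -> colour) (E : {set {set T}}) (v : T) : nat :=
  #|[set u | is_blue (f u) & [set u; v] \in E]|.
Definition rdeg (f : T -> colour) (E : {set {set T}}) (v : T) : nat :=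
  #|[set u | is_red (f u) & [set u; v] \in E]|.

Definition under_illusion f E v : bool := bdeg f E v < rdeg f E v.

Definition no_illusion f E : bool := [forall v, ~~ under_illusion f E v].

Definition optimal_MIAE f (E E' : {set {set T}}) : Prop :=
  [/\ edge_set E', E \subset E', no_illusion f E' &
      forall E'', edge_set E'' -> E \subset E'' -> no_illusion f E'' ->
        #|E' :\: E| <= #|E'' :\: E| ].

Definition optimal_MIRE f (E E' : {set {set T}}) : Prop :=
  [/\ edge_set E', E' \subset E, no_illusion f E' &
      forall E'', edge_set E'' -> E'' \subset E -> no_illusion f E'' ->
        #|E :\: E'| <= #|E :\: E''| ].

Definition optimal_MIE f (E E' : {set {set T}}) : Prop :=
  [/\ edge_set E', no_illusion f E' &
      forall E'', edge_set E'' -> no_illusion f E'' ->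
        #|E :\: E'| + #|E' :\: E| <= #|E :\: E''| + #|E'' :\: E| ].

End Graphs.

(* Main.v *)
Require Import Defs.
From mathcomp Require Import all_boot.

Section H.
Variable T : finType.

Lemma rem_ok (f : T -> colour) (E' : {set {set T}}) (e : {set T}) :
  e \subset red_nodes f -> edge_set E' -> no_illusion f E' ->
  edge_set (E' :\ e) /\ no_illusion f (E' :\ e).
Proof.
move=> hr /forallP hE /forallP hN; split.
  apply/forallP=> x; apply/implyP=> /setD1P [_ hx].
  exact: (implyP (hE x) hx).
apply/forallP=> w; have := hN w; rewrite /under_illusion -!leqNgt => h.
have hb : bdeg f (E' :\ e) w = bdeg f E' w.
  rewrite /bdeg; apply: eq_card => u; rewrite !inE.
  case hu: (is_blue (f u)) => //=; rewrite andb_idl // => hin; apply/eqP=> he.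
  have : u \in red_nodes f by apply: (subsetP hr); rewrite -he !inE eqxx.
  by rewrite inE; case: (f u) hu.
rewrite hb; apply: leq_trans h; apply: subset_leq_card; apply/subsetP=> u.
by rewrite !inE => /andP [-> /andP [_ ->]].
Qed.
End H.

Theorem mainTheorem1 (T : finType) (E : {set {set T}}) (f : T -> colour)
    (E' : {set {set T}}) :
  edge_set E ->
  #|red_nodes f| < #|blue_nodes f| ->
  optimal_MIE f E E' \/ optimal_MIAE f E E' ->
  forall e, e \in E' :\: E -> ~~ (e \subset red_nodes f).
Proof.
move=> _ _ hopt e he; apply/negP=> hr.
move: (he); rewrite inE => /andP [heE heE'].
have h1 : (E' :\ e) :\: E = ((E' :\: E) :\ e).
  by apply/setP=> x; rewrite !inE; case: (x == e); case: (x \in E).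
have h2 : E :\: (E' :\ e) = E :\: E'.
  apply/setP=> x; rewrite !inE; have [->|] := eqVneq x e; last by [].
  by rewrite (negbTE heE) !andbF.
have hc : #|(E' :\ e) :\: E| < #|E' :\: E|.
  by rewrite h1 (cardsD1 e (E' :\: E)) he.
case: hopt => [[hs hn hmin]|[hs hsub hn hmin]].
- have [hs' hn'] := @rem_ok _ _ _ _ hr hs hn.
  have := hmin _ hs' hn'; rewrite h2 leq_add2l.
  by rewrite leqNgt hc.
- have [hs' hn'] := @rem_ok _ _ _ _ hr hs hn.
  have hsub' : E \subset E' :\ e.
    apply/subsetP=> x hx; rewrite !inE (subsetP hsub _ hx) andbT.
    by apply/eqP=> hxe; move: heE; rewrite -hxe hx.
  by have := hmin _ hs' hsub' hn'; rewrite leqNgt hc.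
Qed.
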